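(* If $2^{a_1}3^{a_2}5^{a_3}\cdots=\prod_i p_i^{a_i}$ is a reduced integer, then $a_2\ge a_3\ge a_4\ge\cdots$.
   Context: Let $p_i$ denote the $i$-th prime ($p_1=2$). A positive integer $\prod_i p_i^{a_i}$ (with $a_i=0$ for all sufficiently large $i$) is called reduced if $\left\lfloor\frac{a_i+1}{a_j+2}\right\rfloor<\frac{\log p_j}{\log p_i}$ for all $i,j\ne 1$, and $2^{a_1}<8p_j^2$ for every $j$ with $a_j=0$. *)

(* Defs.v *)
From Stdlib Require Import Reals.
From mathcomp Require Import all_boot.

Set Implicit Arguments.
Unset Strict Implicit.
Unset Printing Implicit Defensive.

Lemma next_prime_ex (m : nat) : exists p, (m < p) && prime p.
Proof. by have [p lt_mp pr_p] := prime_above m; exists p; rewrite lt_mp pr_p. Qed.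

Definition next_prime (m : nat) : nat := ex_minn (next_prime_ex m).

Fixpoint prime0 (k : nat) : nat :=
  if k is k'.+1 then next_prime (prime0 k') else 2.

(* p_i, the i-th prime, 1-indexed: p 1 = 2, p 2 = 3, ... *)
Definition p (i : nat) : nat := prime0 i.-1.

Definition a (n i : nat) : nat := logn (p i) n.

Definition reduced (n : nat) : Prop :=
  0 < n /\
  (forall i j : nat, 2 <= i -> 2 <= j ->
     Rlt (INR ((a n i).+1 %/ (a n j).+2))
         (Rdiv (ln (INR (p j))) (ln (INR (p i))))) /\
  (forall j : nat, 1 <= j -> a n j = 0 -> 2 ^ (a n 1) < 8 * (p j) ^ 2).

(* Main.v *)
Require Import Defs.
From Stdlib Require Import Reals Lra.
From mathcomp Require Import all_boot.

Lemma next_prime_gt m : m < next_prime m.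
Proof. rewrite /next_prime; case: ex_minnP => q /andP [] //. Qed.

Lemma prime0_ge2 k : 2 <= prime0 k.
Proof. elim: k => //= k IH; exact: leq_trans IH (ltnW (next_prime_gt _)). Qed.

Theorem lemma3p11 (n : nat) :
  reduced n -> forall i : nat, 2 <= i -> a n i.+1 <= a n i.
Proof.
move=> [_ [H _]] i Hi.
have := H i.+1 i (leq_trans Hi (leqnSn i)) Hi.
have Hp1 : 2 <= p i by apply: prime0_ge2.
have Hp2 : p i < p i.+1.
  rewrite /p; case: i Hi Hp1 => [|i] //= _ _; exact: next_prime_gt.
have R1 : Rlt 1 (INR (p i)) by apply: lt_1_INR; apply/ltP.
have R2 : Rlt (INR (p i)) (INR (p i.+1)) by apply: lt_INR; apply/ltP.
have L1 : Rlt 0 (ln (INR (p i))) by rewrite -ln_1; apply: ln_increasing; lra.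
have L2 : Rlt (ln (INR (p i))) (ln (INR (p i.+1))) by apply: ln_increasing; lra.
have Q : Rlt (ln (INR (p i)) / ln (INR (p i.+1))) 1.
  apply Rmult_lt_reg_r with (ln (INR (p i.+1))); first lra.
  rewrite Rmult_1_l /Rdiv Rmult_assoc Rinv_l; lra.
move=> Hlt.
have : Rlt (INR ((a n i.+1).+1 %/ (a n i).+2)) (INR 1) by simpl; lra.
move/INR_lt/ltP; rewrite ltnS leqn0 => /eqP H0.
have : ~~ (0 < (a n i.+1).+1 %/ (a n i).+2) by rewrite H0.
by rewrite divn_gt0 // -ltnNge ltnS.
Qed.
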